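(* Let $\mathcal A,\mathcal E\in\mathbb Q^{n\times n\times n_3}$, let $\operatorname{Ind}_{QT}(\mathcal A)=k$ and let $\mathcal A^D$ be the QT-Drazin inverse of $\mathcal A$. Suppose $\mathcal E=\mathcal A*_Q\mathcal A^D*_Q\mathcal E*_Q\mathcal A*_Q\mathcal A^D$, and set $\mathcal B=\mathcal A+\mathcal E$. If $\|\mathcal A^D*_Q\mathcal E\|_s<1$, then \begin{align*} \mathcal A*_Q\mathcal A^D&=\mathcal B*_Q\mathcal B^D,\\ \mathcal B^D-\mathcal A^D&=-\mathcal B^D*_Q\mathcal E*_Q\mathcal A^D=-\mathcal A^D*_Q\mathcal E*_Q\mathcal B^D,\\ \mathcal B^D&=(\mathcal I+\mathcal A^D*_Q\mathcal E)^{-1}*_Q\mathcal A^D=\mathcal A^D*_Q(\mathcal I+\mathcal E*_Q\mathcal A^D)^{-1}, \end{align*} where $\mathcal B^D$ is the QT-Drazin inverse of $\mathcal B$.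
   Context: $\mathbb Q$ denotes the real quaternions with the usual Hamilton multiplication and $|a|=\sqrt{a_0^2+a_1^2+a_2^2+a_3^2}$; $\mathbb C$ is identified with $\{a_0+a_1\mathbf i\}$. Every quaternion array $A=A_0+A_1\mathbf i+A_2\mathbf j+A_3\mathbf k$ (real $A_t$) is written uniquely as $A=A_{\mathbf d}+\mathbf jA_{\mathbf c}$ with $A_{\mathbf d}=A_0+A_1\mathbf i$, $A_{\mathbf c}=A_2-A_3\mathbf i$. For $\mathcal A\in\mathbb Q^{n_1\times n_2\times n_3}$, $\mathcal A^{(s)}=\mathcal A(:,:,s)$. For a complex tensor $\mathcal C$, $\mathtt{bcirc}(\mathcal C)$ is the block circulant matrix with $(p,q)$ block $\mathcal C^{(((p-q)\bmod n_3)+1)}$. $P_{n_3}$ is the permutation matrix with first row $e_1^T$ and $r$-th row $e_{n_3+2-r}^T$ ($r\ge2$). $\mathtt{bcirc_z}(\mathcal A)=\mathtt{bcirc}(\mathcal A_{\mathbf d})+\mathbf j\,\mathtt{bcirc}(\mathcal A_{\mathbf c})(P_{n_3}\otimes I_{n_2})$. $\mathtt{unfold}(\mathcal B)=[\mathcal B^{(1)};\dots;\mathcal B^{(n_3)}]$, $\mathtt{fold}$ its inverse; QT-product $\mathcal A*_Q\mathcal B=\mathtt{fold}(\mathtt{bcirc_z}(\mathcal A)\mathtt{unfold}(\mathcal B))$; identity tensor $\mathcal I$: first frontal slice $I_n$, others zero; $\mathcal A^0=\mathcal I$, $\mathcal A^{k+1}=\mathcal A*_Q\mathcal A^k$; $\mathcal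 M^{-1}$ is the tensor with $\mathcal M*_Q\mathcal M^{-1}=\mathcal M^{-1}*_Q\mathcal M=\mathcal I$. Conjugate transpose: for complex $\mathcal C$, $\mathcal C^*$ has frontal slices $(\mathcal C^{(1)})^*$ and $(\mathcal C^{(n_3+2-s)})^*$ ($s\ge2$); $\mathcal A^*$ is defined by $\mathtt{unfold}(\mathcal A^* )=\mathtt{unfold}(\mathcal A_{\mathbf d}^* )-(P_{n_3}\otimes I_{n_2})\mathtt{unfold}(\mathcal A_{\mathbf c}^* )\mathbf j$; $\mathcal U$ is unitary if $\mathcal U^**_Q\mathcal U=\mathcal U*_Q\mathcal U^*=\mathcal I$. QT-rank: given a QT-SVD $\mathcal A=\mathcal U*_Q\mathcal S*_Q\mathcal V^*$ ($\mathcal U,\mathcal V$ unitary, every frontal slice of $\mathcal S$ diagonal), $\operatorname{rank}_{QT}(\mathcal A)=\#\{i\le\min(n_1,n_2):\|\mathcal S(i,i,:)\|_F>0\}$. QT-index: least $k\ge0$ with $\operatorname{rank}_{QT}(\mathcal A^{k+1})=\operatorname{rank}_{QT}(\mathcal A^k)$. QT-Drazin inverse of $\mathcal A$ with $\operatorname{Ind}_{QT}(\mathcal A)=k$: $\mathcal X=\mathcal A^D$ with $\mathcal A^k*_Q\mathcal X*_Q\mathcal A=\mathcal A^k$, $\mathcal X*_Q\mathcal A*_Q\mathcal X=\mathcal X$, $\mathcal A*_Q\mathcal X=\mathcal X*_Q\mathcal A$. For a quaternion matrix $M$, $\|M\|_2=\max_{\|x\|=1}\|Mx\|$ with the Euclidean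 norm on quaternion vectors; QT-spectral norm $\|\mathcal A\|_s=\|\mathtt{bcirc_z}(\mathcal A)\|_2$. *)

(* Defs.v *)
From mathcomp Require Import all_boot all_order all_algebra.
From mathcomp Require Import classical_sets boolp reals.
Set Implicit Arguments. Unset Strict Implicit. Unset Printing Implicit Defensive.
Import Order.TTheory GRing.Theory Num.Theory.
Local Open Scope ring_scope.

Section QT.
Variable R : realType.

Definition quat := (R * R * R * R)%type.
Definition mkq (a0 a1 a2 a3 : R) : quat := (a0, a1, a2, a3).
Definition q0 (a : quat) : R := a.1.1.1.
Definition q1 (a : quat) : R := a.1.1.2.
Definition q2 (a : quat) : R := a.1.2.
Definition q3 (a : quat) : R := a.2.

Definition qmul (a b : quat) : quat :=
  mkq (q0 a * q0 b - q1 a * q1 b - q2 a * q2 b - q3 a * q3 b)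
      (q0 a * q1 b + q1 a * q0 b + q2 a * q3 b - q3 a * q2 b)
      (q0 a * q2 b - q1 a * q3 b + q2 a * q0 b + q3 a * q1 b)
      (q0 a * q3 b + q1 a * q2 b - q2 a * q1 b + q3 a * q0 b).
Definition qone : quat := mkq 1 0 0 0.
Definition qj : quat := mkq 0 0 1 0.
Definition qconj (a : quat) : quat := mkq (q0 a) (- q1 a) (- q2 a) (- q3 a).
Definition qabs (a : quat) : R :=
  Num.sqrt (q0 a ^+ 2 + q1 a ^+ 2 + q2 a ^+ 2 + q3 a ^+ 2).

Definition qmx (I J : finType) := I -> J -> quat.
Definition qmx_mul (I J K : finType) (M : qmx I J) (N : qmx J K) : qmx I K :=
  fun i k => \sum_(j : J) qmul (M i j) (N j k).
Definition qmx_add (I J : finType) (M N : qmx I J) : qmx I J :=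
  fun i j => M i j + N i j.
Definition qmx_sub (I J : finType) (M N : qmx I J) : qmx I J :=
  fun i j => M i j - N i j.
Definition qmx_lscale (I J : finType) (q : quat) (M : qmx I J) : qmx I J :=
  fun i j => qmul q (M i j).
Definition qmx_rscale (I J : finType) (M : qmx I J) (q : quat) : qmx I J :=
  fun i j => qmul (M i j) q.

Definition qvnorm (J : finType) (x : J -> quat) : R :=
  Num.sqrt (\sum_(j : J) qabs (x j) ^+ 2).
Definition qmx_apply (I J : finType) (M : qmx I J) (x : J -> quat) : I -> quat :=
  fun i => \sum_(j : J) qmul (M i j) (x j).
Definition qmx_norm2 (I J : finType) (M : qmx I J) : R :=
  sup [set qvnorm (qmx_apply M x) | x in [set x : J -> quat | qvnorm x = 1]].

Definition qtensor (n1 n2 n3 : nat) := 'I_n1 -> 'I_n2 -> 'I_n3 -> quat.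

(* frontal slice with a natural-number (0-based) index *)
Definition tslice (n3 : nat) (f : 'I_n3 -> quat) (s : nat) : quat :=
  match insub s with Some o => f o | None => 0 end.

(* A = A_d + j A_c with A_d = A0 + A1 i, A_c = A2 - A3 i (complex tensors,
   complex numbers embedded in the quaternions) *)
Definition tpart_d n1 n2 n3 (A : qtensor n1 n2 n3) : qtensor n1 n2 n3 :=
  fun i j s => mkq (q0 (A i j s)) (q1 (A i j s)) 0 0.
Definition tpart_c n1 n2 n3 (A : qtensor n1 n2 n3) : qtensor n1 n2 n3 :=
  fun i j s => mkq (q2 (A i j s)) (- q3 (A i j s)) 0 0.

(* Block matrices: row index (p, i) = i-th row of the p-th block row (0-based) *)
(* bcirc(C): (p,q) block is C^{((p-q) mod n3)+1}, i.e. 0-based slice (p-q) mod n3 *)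
Definition bcirc n1 n2 n3 (C : qtensor n1 n2 n3) :
  qmx ('I_n3 * 'I_n1)%type ('I_n3 * 'I_n2)%type :=
  fun pi qj => tslice (C pi.2 qj.2) ((pi.1 + n3 - qj.1) %% n3)%N.

(* P_{n3}: first row e_1^T, r-th row e_{n3+2-r}^T; 0-based: row r has its 1
   in column (n3 - r) mod n3 *)
Definition Pn (n3 : nat) : qmx 'I_n3 'I_n3 :=
  fun r c => if (c : nat) == ((n3 - r) %% n3)%N then qone else 0.
(* Kronecker product P_{n3} (x) I_m *)
Definition PkronI (n3 m : nat) : qmx ('I_n3 * 'I_m)%type ('I_n3 * 'I_m)%type :=
  fun ra cb => if ra.2 == cb.2 then Pn ra.1 cb.1 else 0.

Definition bcirc_z n1 n2 n3 (A : qtensor n1 n2 n3) :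
  qmx ('I_n3 * 'I_n1)%type ('I_n3 * 'I_n2)%type :=
  qmx_add (bcirc (tpart_d A))
          (qmx_lscale qj (qmx_mul (bcirc (tpart_c A)) (@PkronI n3 n2))).

Definition tunfold n1 n2 n3 (B : qtensor n1 n2 n3) : qmx ('I_n3 * 'I_n1)%type 'I_n2 :=
  fun si j => B si.2 j si.1.
Definition tfold n1 n2 n3 (M : qmx ('I_n3 * 'I_n1)%type 'I_n2) : qtensor n1 n2 n3 :=
  fun i j s => M (s, i) j.

Definition qtprod n1 n2 n3 n4 (A : qtensor n1 n2 n3) (B : qtensor n2 n4 n3) :
  qtensor n1 n4 n3 := tfold (qmx_mul (bcirc_z A) (tunfold B)).

Definition qtadd n1 n2 n3 (A B : qtensor n1 n2 n3) : qtensor n1 n2 n3 :=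
  fun i j s => A i j s + B i j s.
Definition qtsub n1 n2 n3 (A B : qtensor n1 n2 n3) : qtensor n1 n2 n3 :=
  fun i j s => A i j s - B i j s.
Definition qtopp n1 n2 n3 (A : qtensor n1 n2 n3) : qtensor n1 n2 n3 :=
  fun i j s => - A i j s.

Definition qtid n n3 : qtensor n n n3 :=
  fun i j s => if ((s : nat) == 0%N) && (i == j) then qone else 0.

Fixpoint qtpow n n3 (A : qtensor n n n3) (k : nat) : qtensor n n n3 :=
  match k with
  | 0%N => @qtid n n3
  | k'.+1 => qtprod A (qtpow A k')
  end.

Definition qtinverse n n3 (M X : qtensor n n n3) : Prop :=
  qtprod M X = @qtid n n3 /\ qtprod X M = @qtid n n3.

(* conjugate transpose of a complex tensor: slices (C^(1))^*, (C^(n3+2-s))^* *)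
Definition ctconj n1 n2 n3 (C : qtensor n1 n2 n3) : qtensor n2 n1 n3 :=
  fun j i s => qconj (tslice (C i j) ((n3 - s) %% n3)%N).

(* unfold(A^H) = unfold(A_d^H) - (P_{n3} (x) I_{n2}) unfold(A_c^H) j,  ^H = conjugate transpose *)
Definition qtconj n1 n2 n3 (A : qtensor n1 n2 n3) : qtensor n2 n1 n3 :=
  tfold (qmx_sub (tunfold (ctconj (tpart_d A)))
                 (qmx_rscale (qmx_mul (@PkronI n3 n2) (tunfold (ctconj (tpart_c A))))
                             qj)).

Definition qtunitary n n3 (U : qtensor n n n3) : Prop :=
  qtprod (qtconj U) U = @qtid n n3 /\ qtprod U (qtconj U) = @qtid n n3.

Definition tube_frob n1 n2 n3 (S : qtensor n1 n2 n3) (i : 'I_n1) (j : 'I_n2) : R :=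
  Num.sqrt (\sum_(s : 'I_n3) qabs (S i j s) ^+ 2).

Definition is_QTrank n1 n2 n3 (A : qtensor n1 n2 n3) (r : nat) : Prop :=
  exists (U : qtensor n1 n1 n3) (S : qtensor n1 n2 n3) (V : qtensor n2 n2 n3),
    [/\ qtunitary U, qtunitary V,
        (forall (i : 'I_n1) (j : 'I_n2) (s : 'I_n3), (i : nat) != (j : nat) -> S i j s = 0),
        A = qtprod (qtprod U S) (qtconj V) &
        r = #|[set i : 'I_n1 | [exists j : 'I_n2,
                 ((i : nat) == j) && (tube_frob S i j > 0)]]|].
(* note: i = j < n2 and i < n1 together mean i < min(n1, n2) *)

Definition rankQT n1 n2 n3 (A : qtensor n1 n2 n3) : nat :=
  xget 0%N [set r | is_QTrank A r].

Definition QTindex n n3 (A : qtensor n n n3) (k : nat) : Prop :=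
  rankQT (qtpow A k.+1) = rankQT (qtpow A k) /\
  forall j, (j < k)%N -> rankQT (qtpow A j.+1) <> rankQT (qtpow A j).

Definition QTdrazin n n3 (A : qtensor n n n3) (k : nat) (X : qtensor n n n3) : Prop :=
  [/\ qtprod (qtprod (qtpow A k) X) A = qtpow A k,
      qtprod (qtprod X A) X = X &
      qtprod A X = qtprod X A].

Definition qtnorm_s n1 n2 n3 (A : qtensor n1 n2 n3) : R := qmx_norm2 (bcirc_z A).

End QT.

Declare Scope qt_scope.
Delimit Scope qt_scope with QT.
Notation "A *Q B" := (qtprod A B) (at level 40, left associativity) : qt_scope.
Notation "A +Q B" := (qtadd A B) (at level 50, left associativity) : qt_scope.
Notation "A -Q B" := (qtsub A B) (at level 50, left associativity) : qt_scope.

(* Main.v *)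
Require Import Defs.
From HB Require Import structures.
From mathcomp Require Import all_boot all_order all_algebra.
From mathcomp Require Import classical_sets boolp reals.
From mathcomp Require Import ring lra zify.
Set Implicit Arguments. Unset Strict Implicit. Unset Printing Implicit Defensive.
Import Order.TTheory GRing.Theory Num.Theory.
Local Open Scope ring_scope.

Section Ord.
Variable n3 : nat.
Local Open Scope nat_scope.
Lemma ord_gt0 (o : 'I_n3) : 0 < n3. Proof. by case: o => m /= h; apply: leq_ltn_trans h. Qed.
Definition omod (x : nat) (o : 'I_n3) : 'I_n3 := Ordinal (ltn_pmod x (ord_gt0 o)).
Definition osub (p q : 'I_n3) := omod (p + n3 - q) p.
Definition oadd (p q : 'I_n3) := omod (p + q) p.
Definition oneg (q : 'I_n3) := omod (n3 - q) q.
Definition ozero (q : 'I_n3) := omod 0 q.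

Lemma mod2 x n : x < n.*2 -> x %% n = if x < n then x else x - n.
Proof.
move=> hx; case: ifP => h; first exact: modn_small.
have e : x = (x - n) + n by rewrite subnK //; lia.
by rewrite {1}e modnDr modn_small //; lia.
Qed.

Lemma osub_spec p q : osub p q < n3 /\ ((osub p q : nat) + q = p \/ (osub p q : nat) + q = p + n3).
Proof.
have hp := ltn_ord p; have hq := ltn_ord q.
rewrite /osub /omod /= mod2; last by lia.
by case: ifP => h; lia.
Qed.

Lemma oadd_spec p q : oadd p q < n3 /\ ((oadd p q : nat) = p + q \/ (oadd p q : nat) + n3 = p + q).
Proof.
have hp := ltn_ord p; have hq := ltn_ord q.
rewrite /oadd /omod /= mod2; last by lia.
by case: ifP => h; lia.
Qed.

Lemma oneg_spec q : oneg q < n3 /\ ((oneg q : nat) + q = n3 \/ ((oneg q : nat) = 0 /\ (q : nat) = 0)).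
Proof.
have hq := ltn_ord q.
rewrite /oneg /omod /= mod2; last by lia.
by case: ifP => h; lia.
Qed.

Lemma ozero_val q : (ozero q : nat) = 0.
Proof. by rewrite /ozero /omod /= mod0n. Qed.

Ltac ospec := repeat match goal with
  | |- context [nat_of_ord (osub ?p ?q)] => have := osub_spec p q; move: (nat_of_ord (osub p q)) => ?
  | |- context [nat_of_ord (oadd ?p ?q)] => have := oadd_spec p q; move: (nat_of_ord (oadd p q)) => ?
  | |- context [nat_of_ord (oneg ?q)] => have := oneg_spec q; move: (nat_of_ord (oneg q)) => ?
  | |- context [nat_of_ord (ozero ?q)] => rewrite ozero_val
  end.

Ltac ordl := repeat match goal with
  | p : 'I_n3 |- _ => have := ltn_ord p; move: (nat_of_ord p) => ?; clear p
  end.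

Lemma osub_osub p q r : osub (osub p r) (osub q r) = osub p q.
Proof. apply: ord_inj; ospec; ordl; lia. Qed.

Lemma oadd_osub_oadd p q r : oadd (osub p r) (oadd q r) = oadd p q.
Proof. apply: ord_inj; ospec; ordl; lia. Qed.
Lemma osub_oadd_oadd p q r : osub (oadd p r) (oadd q r) = osub p q.
Proof. apply: ord_inj; ospec; ordl; lia. Qed.
Lemma oadd_oadd_osub p q r : oadd (oadd p r) (osub q r) = oadd p q.
Proof. apply: ord_inj; ospec; ordl; lia. Qed.
Lemma osub0 p q : osub p (ozero q) = p.
Proof. apply: ord_inj; ospec; ordl; lia. Qed.
Lemma oadd0 p q : oadd p (ozero q) = p.
Proof. apply: ord_inj; ospec; ordl; lia. Qed.
Lemma osub_eq0 p q : ((osub p q : nat) == 0) = (p == q).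
Proof.
apply/eqP/eqP => [h|->]; last by apply/eqP; move: (osub_spec q q); ordl; lia.
apply: ord_inj; move: h; ospec; ordl; lia.
Qed.
Lemma osub_inj r : injective (fun q => osub q r).
Proof. move=> p q /= /(congr1 (@nat_of_ord _)) h; apply: ord_inj; move: h; ospec; ordl; lia. Qed.
Lemma oadd_inj r : injective (fun q => oadd q r).
Proof. move=> p q /= /(congr1 (@nat_of_ord _)) h; apply: ord_inj; move: h; ospec; ordl; lia. Qed.
Lemma oneg_eq (q x : 'I_n3) : ((q : nat) == (n3 - x) %% n3) = (x == oneg q).
Proof.
rewrite mod2; last by have := ltn_ord x; lia.
apply/eqP/eqP => [h|->].
  apply: ord_inj; move: h; ospec; ordl; case: ifP; lia.
ospec; ordl; case: ifP; lia.
Qed.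
Lemma oneg_slice (p q : 'I_n3) : (p + n3 - oneg q) %% n3 = oadd p q.
Proof.
rewrite mod2; last by have := ltn_ord (oneg q); have := ltn_ord p; lia.
ospec; ordl; case: ifP; lia.
Qed.
End Ord.

Section Quat.
Variable R : realType.
Local Notation quat := (quat R).
Implicit Types a b c : quat.

Lemma quatP a b : q0 a = q0 b -> q1 a = q1 b -> q2 a = q2 b -> q3 a = q3 b -> a = b.
Proof. by case: a => [[[? ?] ?] ?]; case: b => [[[? ?] ?] ?]; rewrite /q0 /q1 /q2 /q3 /= => -> -> -> ->. Qed.

Lemma q0D a b : q0 (a + b) = q0 a + q0 b. Proof. by []. Qed.
Lemma q1D a b : q1 (a + b) = q1 a + q1 b. Proof. by []. Qed.
Lemma q2D a b : q2 (a + b) = q2 a + q2 b. Proof. by []. Qed.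
Lemma q3D a b : q3 (a + b) = q3 a + q3 b. Proof. by []. Qed.
Lemma q0N a : q0 (- a) = - q0 a. Proof. by []. Qed.
Lemma q1N a : q1 (- a) = - q1 a. Proof. by []. Qed.
Lemma q2N a : q2 (- a) = - q2 a. Proof. by []. Qed.
Lemma q3N a : q3 (- a) = - q3 a. Proof. by []. Qed.
Lemma q00 : q0 (0 : quat) = 0. Proof. by []. Qed.
Lemma q10 : q1 (0 : quat) = 0. Proof. by []. Qed.
Lemma q20 : q2 (0 : quat) = 0. Proof. by []. Qed.
Lemma q30 : q3 (0 : quat) = 0. Proof. by []. Qed.
Lemma mkqE (x0 x1 x2 x3 : R) : (q0 (mkq x0 x1 x2 x3) = x0) * (q1 (mkq x0 x1 x2 x3) = x1)
  * (q2 (mkq x0 x1 x2 x3) = x2) * (q3 (mkq x0 x1 x2 x3) = x3).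
Proof. by []. Qed.

Definition qcomps := (q0D, q1D, q2D, q3D, q0N, q1N, q2N, q3N, q00, q10, q20, q30, mkqE).

Ltac qsolve := apply: quatP; rewrite /qmul /qone /qj ?qcomps; ring.

Lemma qmulA a b c : qmul (qmul a b) c = qmul a (qmul b c). Proof. qsolve. Qed.
Lemma qmulDl a b c : qmul (a + b) c = qmul a c + qmul b c. Proof. qsolve. Qed.
Lemma qmulDr a b c : qmul a (b + c) = qmul a b + qmul a c. Proof. qsolve. Qed.
Lemma qmul0r a : qmul 0 a = 0. Proof. qsolve. Qed.
Lemma qmulr0 a : qmul a 0 = 0. Proof. qsolve. Qed.
Lemma qmul1r a : qmul (qone R) a = a. Proof. qsolve. Qed.
Lemma qmulr1 a : qmul a (qone R) = a. Proof. qsolve. Qed.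

Lemma qmul_suml (I : Type) (r : seq I) (P : pred I) (F : I -> quat) c :
  qmul (\sum_(i <- r | P i) F i) c = \sum_(i <- r | P i) qmul (F i) c.
Proof. exact: (big_morph (fun x => qmul x c) (fun x y => qmulDl x y c) (qmul0r c)). Qed.
Lemma qmul_sumr (I : Type) (r : seq I) (P : pred I) (F : I -> quat) c :
  qmul c (\sum_(i <- r | P i) F i) = \sum_(i <- r | P i) qmul c (F i).
Proof. exact: (big_morph (fun x => qmul c x) (fun x y => qmulDr c x y) (qmulr0 c)). Qed.

Definition dq a : quat := mkq (q0 a) (q1 a) 0 0.
Definition cq a : quat := mkq 0 0 (q2 a) (q3 a).

Lemma dqD a b : dq (a + b) = dq a + dq b. Proof. qsolve. Qed.
Lemma cqD a b : cq (a + b) = cq a + cq b. Proof. qsolve. Qed.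
Lemma dq0 : dq 0 = 0. Proof. qsolve. Qed.
Lemma cq0 : cq 0 = 0. Proof. qsolve. Qed.
Lemma dq_sum (I : Type) (r : seq I) (P : pred I) (F : I -> quat) :
  dq (\sum_(i <- r | P i) F i) = \sum_(i <- r | P i) dq (F i).
Proof. exact: (big_morph dq dqD dq0). Qed.
Lemma cq_sum (I : Type) (r : seq I) (P : pred I) (F : I -> quat) :
  cq (\sum_(i <- r | P i) F i) = \sum_(i <- r | P i) cq (F i).
Proof. exact: (big_morph cq cqD cq0). Qed.
Lemma dqM a b : dq (qmul a b) = qmul (dq a) (dq b) + qmul (cq a) (cq b). Proof. qsolve. Qed.
Lemma cqM a b : cq (qmul a b) = qmul (dq a) (cq b) + qmul (cq a) (dq b). Proof. qsolve. Qed.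
Lemma dq_dc a b : dq (dq a + cq b) = dq a. Proof. qsolve. Qed.
Lemma cq_dc a b : cq (dq a + cq b) = cq b. Proof. qsolve. Qed.
Lemma dq_cq a : dq a + cq a = a. Proof. qsolve. Qed.
Lemma dq1 : dq (qone R) = (qone R). Proof. qsolve. Qed.
Lemma cq1 : cq (qone R) = 0. Proof. qsolve. Qed.

End Quat.

Unset Implicit Arguments.

Section Generic.
Variable Rg : pzRingType.

Lemma drz_powX (B X : Rg) j : X * B * X = X -> B * X = X * B ->
  X = B ^+ j * X ^+ j.+1.
Proof.
move=> h2 h3.
have hX2 : B * X ^+ 2 = X by rewrite expr2 mulrA h3.
elim: j => [|j IH]; first by rewrite expr0 mul1r expr1.
rewrite exprSr -mulrA -add2n exprD (mulrA B) hX2 -exprS. exact: IH.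
Qed.

Lemma drz_powY (B Y : Rg) j : Y * B * Y = Y -> B * Y = Y * B ->
  Y = Y ^+ j.+1 * B ^+ j.
Proof.
move=> h2 h3.
have hY2 : Y ^+ 2 * B = Y by rewrite expr2 -mulrA -h3 mulrA.
elim: j => [|j IH]; first by rewrite expr0 mulr1 expr1.
rewrite -addn2 exprD (exprS B) mulrA -(mulrA (Y ^+ j)) hY2 -exprSr. exact: IH.
Qed.

Lemma drz_step (B X : Rg) k j : B ^+ k * X * B = B ^+ k -> B * X = X * B ->
  B ^+ (j + k) = B ^+ (j + k).+1 * X.
Proof.
move=> h1 h3.
have e : B ^+ k = B ^+ k.+1 * X by rewrite -{1}h1 -mulrA -h3 mulrA -exprSr.
by rewrite exprD {1}e -addnS exprD mulrA.
Qed.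

Lemma drz_uniq (B X Y : Rg) k1 k2 :
  B ^+ k1 * X * B = B ^+ k1 -> X * B * X = X -> B * X = X * B ->
  B ^+ k2 * Y * B = B ^+ k2 -> Y * B * Y = Y -> B * Y = Y * B ->
  X = Y.
Proof.
move=> hX1 hX2 hX3 hY1 hY2 hY3.
set m := (k2 + k1)%N.
have hXm : B ^+ m = B ^+ m.+1 * X by apply: drz_step.
have hYm : B ^+ m = B ^+ m.+1 * Y by rewrite /m addnC; apply: drz_step.
have cYB : GRing.comm Y (B ^+ m.+1) by apply/commrX; rewrite /GRing.comm hY3.
have eX : X = Y * B * X.
  rewrite {1}(drz_powX B X m hX2 hX3) hYm -cYB exprSr -!mulrA.
  by rewrite (mulrA (B ^+ m)) -exprSr exprS -mulrA -(drz_powX B X m hX2 hX3).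
have eY : Y = Y * B * X.
  by rewrite {1}(drz_powY B Y m hY2 hY3) hXm (exprSr B) !mulrA -(drz_powY B Y m hY2 hY3).
by rewrite eX -eY.
Qed.

Lemma drazin_perturb (A E AD BD M : Rg) k kB :
  A ^+ k * AD * A = A ^+ k -> AD * A * AD = AD -> A * AD = AD * A ->
  E = A * AD * E * A * AD ->
  (A + E) ^+ kB * BD * (A + E) = (A + E) ^+ kB ->
  BD * (A + E) * BD = BD -> (A + E) * BD = BD * (A + E) ->
  (1 + AD * E) * M = 1 -> M * (1 + AD * E) = 1 ->
  BD = M * AD /\ (A + E) * BD = A * AD.
Proof.
move=> hA1 hA2 hA3 hE hB1 hB2 hB3 hM1 hM2.
set P := A * AD.
set T := AD * E.
set B := A + E.
have defP : A * AD = P by [].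
have hADA : AD * A = P by rewrite -hA3.
have defT : AD * E = T by [].
have defB : A + E = B by [].
have hE' : E = P * E * P by rewrite {1}hE -/P -(mulrA _ A).
clearbody P T B.
rewrite defT in hM1 hM2; rewrite defB in hB1 hB2 hB3.
have hPAD : P * AD = AD by rewrite -hADA hA2.
have hADP : AD * P = AD by rewrite (esym defP) mulrA hA2.
have hPP : P * P = P by rewrite {1}(esym defP) -mulrA hADP defP.
have hPE : P * E = E by rewrite {1}hE' (mulrA P (P * E)) (mulrA P P) hPP -hE'.
have hEP : E * P = E by rewrite {1}hE' -(mulrA _ P P) hPP -hE'.
have hTP : T * P = T by rewrite -defT -mulrA hEP.
have hPT : P * T = T by rewrite -defT mulrA hPAD.
have hB : B = A * (1 + T) by rewrite mulrDr mulr1 -defT mulrA defP hPE.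
have h1TP : (1 + T) * P = P * (1 + T) by rewrite mulrDl mulrDr mul1r mulr1 hTP hPT.
have hZB : M * AD * B = P.
  rewrite -defB -mulrA mulrDr hADA defT.
  have -> : P + T = (1 + T) * P by rewrite mulrDl mul1r hTP.
  by rewrite mulrA hM2 mul1r.
have hBZ : B * (M * AD) = P by rewrite hB -mulrA (mulrA (1 + T)) hM1 mul1r.
have hPM : P * M = M * P.
  rewrite -[M * P]mulr1 -hM1 mulrA -(mulrA M P) -h1TP (mulrA M (1 + T)).
  by rewrite hM2 mul1r.
have hZBZ : M * AD * B * (M * AD) = M * AD.
  by rewrite hZB mulrA hPM -mulrA hPAD.
have hAP : A * P = P * A by rewrite -{1}hADA mulrA defP.
have hAjP j : A ^+ j * (1 - P) = (1 - P) * A ^+ j.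
  have c : GRing.comm A (1 - P) by apply: commrB; [exact: commr1 | exact: hAP].
  exact: (esym (commrX j (commr_sym c))).
have hE1P : E * (1 - P) = 0 by rewrite mulrBr mulr1 hEP subrr.
have hBj j : B ^+ j * (1 - P) = A ^+ j * (1 - P).
  elim: j => [|j IH]; first by rewrite !expr0.
  rewrite exprS -mulrA IH -defB mulrDl hAjP (mulrA E) hE1P mul0r addr0.
  by rewrite mulrA -mulrA -hAjP mulrA -exprS.
have hAk : A ^+ k * (1 - P) = 0.
  by rewrite mulrBr mulr1 -hADA mulrA hA1 subrr.
have hBk : B ^+ k * (M * AD) * B = B ^+ k.
  rewrite -mulrA hZB.
  apply/eqP; rewrite -subr_eq0 -oppr_eq0 opprB -{1}[B ^+ k]mulr1 -mulrBr hBj hAk //.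
have hcomm : B * (M * AD) = M * AD * B by rewrite hBZ hZB.
have eBD := (drz_uniq B BD (M * AD) kB k hB1 hB2 hB3 hBk hZBZ hcomm).
split; first exact: eBD.
by rewrite eBD hBZ.
Qed.

Lemma drazin_all (A E AD BD M : Rg) k kB :
  A ^+ k * AD * A = A ^+ k -> AD * A * AD = AD -> A * AD = AD * A ->
  E = A * AD * E * A * AD ->
  (A + E) ^+ kB * BD * (A + E) = (A + E) ^+ kB ->
  BD * (A + E) * BD = BD -> (A + E) * BD = BD * (A + E) ->
  (1 + AD * E) * M = 1 -> M * (1 + AD * E) = 1 ->
  [/\ A * AD = (A + E) * BD,
      BD - AD = - (BD * E * AD),
      BD - AD = - (AD * E * BD),
      BD = M * AD &
      exists M', [/\ (1 + E * AD) * M' = 1, M' * (1 + E * AD) = 1 & BD = AD * M']].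
Proof.
move=> hA1 hA2 hA3 hE hB1 hB2 hB3 hM1 hM2.
have [eBD eBZ] := drazin_perturb A E AD BD M k kB hA1 hA2 hA3 hE hB1 hB2 hB3 hM1 hM2.
have g2 : BD - AD = - (BD * E * AD).
  rewrite eBD -{2}[AD]mul1r -hM2 -mulrA mulrDl mul1r mulrDr opprD addrA subrr add0r.
  by rewrite !mulrA.
have g3 : BD - AD = - (AD * E * BD).
  rewrite eBD -{2}[AD]mul1r -hM1 -mulrA mulrDl mul1r opprD addrA subrr add0r.
  by rewrite !mulrA.
split => //.
have key1 : E * AD * E * M * AD = E * AD - E * M * AD.
  have h : E * ((1 + AD * E) * M * AD) = E * AD by rewrite hM1 mul1r.
  rewrite !mulrDl mul1r mulrDr !mulrA in h.
  by rewrite -{2}h (addrC (E * M * AD)) addrK.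
have key2 : E * M * AD * E * AD = E * AD - E * M * AD.
  have h : E * (M * (1 + AD * E)) * AD = E * AD by rewrite hM2 mulr1.
  rewrite !mulrDr mulr1 mulrDl !mulrA in h.
  by rewrite -{1}h (addrC (E * M * AD)) addrK.
exists (1 - E * M * AD); split.
- rewrite mulrDl mul1r mulrBr mulr1 !mulrA key1.
  by rewrite opprB subrKC subrK.
- rewrite mulrBl mul1r mulrDr mulr1 !mulrA key2.
  by rewrite subrKC addrK.
  by rewrite mulrBr mulr1 !mulrA -[BD](subrKC AD) g3 eBD !mulrA.
Qed.
End Generic.

Set Implicit Arguments.

Section Tens.
Variables (R : realType) (n n3 : nat).
Local Notation tens := (qtensor R n n n3).
Local Notation quat := (quat R).

Lemma tensP (A B : tens) : (forall i j s, A i j s = B i j s) -> A = B.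
Proof. move=> h; apply: funext => i; apply: funext => j; apply: funext => s; exact: h. Qed.

Lemma tslice_val (f : 'I_n3 -> quat) (o : 'I_n3) : tslice f o = f o.
Proof. by rewrite /tslice valK. Qed.

Lemma bzE (A : tens) p i q j :
  bcirc_z A (p, i) (q, j) = dq (A i j (osub p q)) + cq (A i j (oadd p q)).
Proof.
rewrite /bcirc_z /qmx_add /qmx_lscale /qmx_mul /bcirc /=.
congr (_ + _).
  by rewrite (_ : ((p + n3 - q) %% n3)%N = osub p q) // tslice_val.
have e1 := oneg_eq q; have e2 := oneg_slice p q.
move: (oneg q) e1 e2 => o e1 e2.
rewrite (bigD1 (o, j)) //= big1 ?addr0.
  rewrite /PkronI /Pn /= eqxx e1 eqxx qmulr1 e2 tslice_val.
  by apply: quatP; rewrite /qmul /qj /tpart_c ?qcomps; ring.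
move=> [x1 x2] /= hx; rewrite /PkronI /Pn /=.
case: eqP => [e|_]; last by rewrite qmulr0.
rewrite e1; case: eqP => [e'|_]; last by rewrite qmulr0.
by move: hx; rewrite e e' eqxx.
Qed.

Lemma bzE' (A : tens) (u v : 'I_n3 * 'I_n) :
  bcirc_z A u v = dq (A u.2 v.2 (osub u.1 v.1)) + cq (A u.2 v.2 (oadd u.1 v.1)).
Proof. by case: u v => [p i] [q j]; exact: bzE. Qed.

Lemma qtprodE (A B : tens) i l s :
  qtprod A B i l s = \sum_(x : 'I_n3 * 'I_n) qmul (bcirc_z A (s, i) x) (B x.2 l x.1).
Proof. by []. Qed.

Lemma bzM (A B : tens) p i r l :
  bcirc_z (qtprod A B) (p, i) (r, l) =
  \sum_(x : 'I_n3 * 'I_n) qmul (bcirc_z A (p, i) x) (bcirc_z B x (r, l)).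
Proof.
rewrite bzE !qtprodE dq_sum cq_sum.
under eq_bigr => x _ do rewrite bzE' dqM dq_dc cq_dc.
under [X in _ + X]eq_bigr => x _ do rewrite bzE' cqM dq_dc cq_dc.
under [RHS]eq_bigr => x _ do rewrite !bzE' qmulDl !qmulDr.
rewrite !big_split /=.
have injS : injective (fun x : 'I_n3 * 'I_n => (osub x.1 r, x.2)).
  move=> [a b] [c d] /= h; have /osub_inj -> := congr1 fst h; by rewrite (congr1 snd h : b = d).
have injA : injective (fun x : 'I_n3 * 'I_n => (oadd x.1 r, x.2)).
  move=> [a b] [c d] /= h; have /oadd_inj -> := congr1 fst h; by rewrite (congr1 snd h : b = d).
rewrite [LHS]addrACA [X in _ + X = _]addrC.
congr (_ + _ + (_ + _)).
- by rewrite (reindex_inj injS); apply: eq_bigr => x _ /=; rewrite osub_osub.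
- by rewrite (reindex_inj injA); apply: eq_bigr => x _ /=; rewrite osub_oadd_oadd.
- by rewrite (reindex_inj injS); apply: eq_bigr => x _ /=; rewrite oadd_oadd_osub.
- by rewrite (reindex_inj injA); apply: eq_bigr => x _ /=; rewrite oadd_osub_oadd.
Qed.

Lemma bzM' (A B : tens) (u v : 'I_n3 * 'I_n) :
  bcirc_z (qtprod A B) u v = \sum_(x : 'I_n3 * 'I_n) qmul (bcirc_z A u x) (bcirc_z B x v).
Proof. by case: u v => [p i] [q j]; exact: bzM. Qed.

Lemma qtmulA (A B C : tens) : qtprod (qtprod A B) C = qtprod A (qtprod B C).
Proof.
apply: tensP => i l s; rewrite !qtprodE.
under eq_bigr => x _ do rewrite bzM' qmul_suml.
under [RHS]eq_bigr => y _ do rewrite qtprodE -surjective_pairing qmul_sumr.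
rewrite exchange_big /=; apply: eq_bigr => y _; apply: eq_bigr => x _.
by rewrite qmulA.
Qed.

Lemma bz_id p i q j :
  bcirc_z (@qtid R n n3) (p, i) (q, j) = if (p == q) && (i == j) then qone R else 0.
Proof.
rewrite bzE.
have -> : cq (@qtid R n n3 i j (oadd p q)) = 0.
  by rewrite /qtid; case: ifP => _; rewrite ?cq1 ?cq0.
by rewrite addr0 /qtid osub_eq0; case: ifP => _; rewrite ?dq1 ?dq0.
Qed.

Lemma qtmul1 (X : tens) : qtprod (@qtid R n n3) X = X.
Proof.
apply: tensP => i l s; rewrite qtprodE (bigD1 (s, i)) //= big1 ?addr0.
  by rewrite bz_id !eqxx qmul1r.
move=> [q j] /= hx; rewrite bz_id; case: ifP => [/andP [/eqP e1 /eqP e2]|_].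
  by move: hx; rewrite e1 e2 eqxx.
by rewrite qmul0r.
Qed.

Lemma qtmulr1 (X : tens) : qtprod X (@qtid R n n3) = X.
Proof.
apply: tensP => i l s; rewrite qtprodE (bigD1 (ozero s, l)) //= big1 ?addr0.
  rewrite /qtid ozero_val !eqxx qmulr1 bzE osub0 oadd0; exact: dq_cq.
move=> [q j] /= hx; rewrite /qtid; case: ifP => [/andP [/eqP e1 /eqP e2]|_].
  have e3 : q = ozero s by apply: ord_inj; rewrite ozero_val.
  by move: hx; rewrite e3 e2 eqxx.
by rewrite qmulr0.
Qed.

Lemma bzD (A B : tens) u v : bcirc_z (qtadd A B) u v = bcirc_z A u v + bcirc_z B u v.
Proof.
rewrite !bzE' /qtadd dqD cqD.
by rewrite addrACA.
Qed.

Lemma qtmulDl (A B C : tens) : qtprod (qtadd A B) C = qtadd (qtprod A C) (qtprod B C).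
Proof.
apply: tensP => i l s; rewrite /qtadd !qtprodE -big_split /=.
by apply: eq_bigr => x _; rewrite bzD qmulDl.
Qed.

Lemma qtmulDr (A B C : tens) : qtprod A (qtadd B C) = qtadd (qtprod A B) (qtprod A C).
Proof.
apply: tensP => i l s; rewrite /qtadd !qtprodE -big_split /=.
by apply: eq_bigr => x _; rewrite qmulDr.
Qed.

End Tens.

Section RingInst.
Variables (R : realType) (n n3 : nat).
Definition tens := qtensor R n n n3.
HB.instance Definition _ := Choice.on tens.
Definition tzero : tens := fun _ _ _ => 0.
Definition tadd : tens -> tens -> tens := @qtadd R n n n3.
Definition topp : tens -> tens := @qtopp R n n n3.
Definition tmul : tens -> tens -> tens := @qtprod R n n n3 n.
Definition tone : tens := @qtid R n n3.
Lemma taddA : associative tadd.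
Proof. by move=> A B C; apply: tensP => i j s; rewrite /tadd /qtadd addrA. Qed.
Lemma taddC : commutative tadd.
Proof. by move=> A B; apply: tensP => i j s; rewrite /tadd /qtadd addrC. Qed.
Lemma tadd0 : left_id tzero tadd.
Proof. by move=> A; apply: tensP => i j s; rewrite /tadd /qtadd add0r. Qed.
Lemma taddN : left_inverse tzero topp tadd.
Proof. by move=> A; apply: tensP => i j s; rewrite /tadd /topp /qtadd /qtopp addNr. Qed.
Lemma tmulA : associative tmul. Proof. move=> x y z; exact: esym (qtmulA x y z). Qed.
Lemma tmul1 : left_id tone tmul. Proof. move=> x; exact: qtmul1. Qed.
Lemma tmulr1 : right_id tone tmul. Proof. move=> x; exact: qtmulr1. Qed.
Lemma tmulDl : left_distributive tmul tadd. Proof. move=> x y z; exact: qtmulDl. Qed.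
Lemma tmulDr : right_distributive tmul tadd. Proof. move=> x y z; exact: qtmulDr. Qed.
HB.instance Definition _ := GRing.isPzRing.Build tens taddA taddC tadd0 taddN
  tmulA tmul1 tmulr1 tmulDl tmulDr.

Lemma tmulE (A B : tens) : A * B = qtprod A B. Proof. by []. Qed.
Lemma taddE (A B : tens) : A + B = qtadd A B. Proof. by []. Qed.
Lemma toppE (A : tens) : - A = qtopp A. Proof. by []. Qed.
Lemma tsubE (A B : tens) : A - B = qtsub A B. Proof. by []. Qed.
Lemma toneE : (1 : tens) = @qtid R n n3. Proof. by []. Qed.
Lemma tpowE (A : tens) k : qtpow A k = A ^+ k.
Proof. by elim: k => [|k IH] //=; rewrite exprS IH. Qed.
End RingInst.

Section FD.
Variables (R : realType) (n n3 : nat).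
Local Notation tens := (qtensor R n n n3).
Definition qscale (c : R) (a : quat R) : quat R :=
  mkq (c * q0 a) (c * q1 a) (c * q2 a) (c * q3 a).
Definition tsc (c : R) (X : tens) : tens := fun i j s => qscale c (X i j s).

Variable F : tens -> tens.
Hypothesis Fadd : forall X Y, F (qtadd X Y) = qtadd (F X) (F Y).
Hypothesis Fsc : forall c X, F (tsc c X) = tsc c (F X).
Hypothesis Finj : injective F.

Local Notation K := ('I_n * 'I_n * 'I_n3)%type.
Local Notation V := {ffun K -> (R^o * R^o * R^o * R^o)%type}.
Definition enc (X : tens) : V := [ffun k => X k.1.1 k.1.2 k.2].
Definition dec (v : V) : tens := fun i j s => v (i, j, s).
Lemma encK : cancel enc dec.
Proof. by move=> X; apply: tensP => i j s; rewrite /dec /enc ffunE. Qed.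
Lemma decK : cancel dec enc.
Proof. by move=> v; apply/ffunP => [[[i j] s]]; rewrite /dec /enc ffunE. Qed.

Definition gF (v : V) : V := enc (F (dec v)).
Lemma gF_lin : linear gF.
Proof.
move=> a u v; rewrite /gF.
have -> : dec (a *: u + v) = qtadd (tsc a (dec u)) (dec v).
  by apply: tensP => i j s; rewrite /dec /qtadd /tsc !ffunE.
rewrite Fadd Fsc; apply/ffunP => k; rewrite !ffunE /qtadd /tsc.
by [].
Qed.
HB.instance Definition _ := GRing.isLinear.Build R V V *:%R gF gF_lin.

Lemma F_surj Y : exists X, F X = Y.
Proof.
pose f := linfun gF.
have kf : lker f == 0%VS.
  apply/lker0P => u v; rewrite !lfunE /= /gF => /(can_inj encK) /Finj.
  exact: (can_inj decK).
exists (dec (f^-1%VF (enc Y))).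
have := lker0_lfunVK kf (enc Y); rewrite lfunE /= /gF.
exact: (can_inj encK).
Qed.
End FD.

Section Norm.
Variable R : realType.
Local Notation quat := (quat R).
Definition qss (a : quat) : R := q0 a ^+ 2 + q1 a ^+ 2 + q2 a ^+ 2 + q3 a ^+ 2.
Lemma qss_ge0 a : 0 <= qss a.
Proof. by rewrite /qss; rewrite !addr_ge0 // sqr_ge0. Qed.
Lemma qabs2 a : qabs a ^+ 2 = qss a.
Proof. by rewrite /qabs sqr_sqrtr // qss_ge0. Qed.

Variable J : finType.
Implicit Types x : J -> quat.

Lemma qvnormE x : qvnorm x = Num.sqrt (\sum_j qss (x j)).
Proof. by rewrite /qvnorm; under eq_bigr => j _ do rewrite qabs2. Qed.

Lemma qvnorm_eq0 x : qvnorm x = 0 -> forall j, x j = 0.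
Proof.
rewrite qvnormE => /eqP; rewrite sqrtr_eq0 => hle j.
have h0 : \sum_j qss (x j) = 0.
  by apply/eqP; rewrite eq_le hle sumr_ge0 // => k _; exact: qss_ge0.
have := psumr_eq0P (fun k _ => qss_ge0 (x k)) h0 (i := j) erefl.
rewrite /qss => hs.
have s0 := sqr_ge0 (q0 (x j)); have s1 := sqr_ge0 (q1 (x j)).
have s2 := sqr_ge0 (q2 (x j)); have s3 := sqr_ge0 (q3 (x j)).
apply: quatP; rewrite ?q00 ?q10 ?q20 ?q30; apply/eqP; rewrite -sqrf_eq0; apply/eqP; lra.
Qed.

Lemma qss_scale (c : R) (a : quat) : qss (qscale c a) = c ^+ 2 * qss a.
Proof. by rewrite /qss /qscale !mkqE; ring. Qed.
Lemma qss_opp (a : quat) : qss (- a) = qss a.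
Proof. by rewrite /qss !qcomps !sqrrN. Qed.

Lemma qvnorm_scale (c : R) x : qvnorm (fun j => qscale c (x j)) = `|c| * qvnorm x.
Proof.
rewrite !qvnormE; under eq_bigr => j _ do rewrite qss_scale.
by rewrite -mulr_sumr sqrtrM ?sqr_ge0 // sqrtr_sqr.
Qed.

Lemma qvnorm_opp x : qvnorm (fun j => - x j) = qvnorm x.
Proof. by rewrite !qvnormE; under eq_bigr => j _ do rewrite qss_opp. Qed.

Lemma qscaleD (c : R) (a b : quat) : qscale c (a + b) = qscale c a + qscale c b.
Proof. by apply: quatP; rewrite /qscale ?qcomps; ring. Qed.
Lemma qscale0 (c : R) : qscale c 0 = 0.
Proof. by apply: quatP; rewrite /qscale ?qcomps; ring. Qed.
Lemma qmul_scale (c : R) (a b : quat) : qmul a (qscale c b) = qscale c (qmul a b).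
Proof. by apply: quatP; rewrite /qscale /qmul ?qcomps; ring. Qed.

Lemma qmx_apply_scale (M : qmx R J J) (c : R) x :
  qmx_apply M (fun j => qscale c (x j)) = fun i => qscale c (qmx_apply M x i).
Proof.
apply: funext => i; rewrite /qmx_apply.
under eq_bigr => j _ do rewrite qmul_scale.
by rewrite (big_morph (@qscale R c) (qscaleD c) (qscale0 c)).
Qed.

Lemma q0_sum (I : Type) (r : seq I) (P : pred I) (F : I -> quat) :
  q0 (\sum_(i <- r | P i) F i) = \sum_(i <- r | P i) q0 (F i).
Proof. exact: (big_morph (@q0 R) (@q0D R) (@q00 R)). Qed.
Lemma q1_sum (I : Type) (r : seq I) (P : pred I) (F : I -> quat) :
  q1 (\sum_(i <- r | P i) F i) = \sum_(i <- r | P i) q1 (F i).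
Proof. exact: (big_morph (@q1 R) (@q1D R) (@q10 R)). Qed.
Lemma q2_sum (I : Type) (r : seq I) (P : pred I) (F : I -> quat) :
  q2 (\sum_(i <- r | P i) F i) = \sum_(i <- r | P i) q2 (F i).
Proof. exact: (big_morph (@q2 R) (@q2D R) (@q20 R)). Qed.
Lemma q3_sum (I : Type) (r : seq I) (P : pred I) (F : I -> quat) :
  q3 (\sum_(i <- r | P i) F i) = \sum_(i <- r | P i) q3 (F i).
Proof. exact: (big_morph (@q3 R) (@q3D R) (@q30 R)). Qed.

Lemma lem_ab (a b : R) : `|b| <= 1 -> a * b <= `|a| /\ - (a * b) <= `|a|.
Proof.
move=> hb.
have h : `|a * b| <= `|a| by rewrite normrM -[X in _ <= X]mulr1 ler_wpM2l.
split; apply: le_trans h; [exact: ler_norm | rewrite -normrN; exact: ler_norm].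
Qed.

Definition sa (a : quat) : R := `|q0 a| + `|q1 a| + `|q2 a| + `|q3 a|.
Definition bnd (b : quat) := [/\ `|q0 b| <= 1, `|q1 b| <= 1, `|q2 b| <= 1 & `|q3 b| <= 1].

Lemma qmul_cb (a b : quat) : bnd b ->
  [/\ `|q0 (qmul a b)| <= sa a, `|q1 (qmul a b)| <= sa a,
      `|q2 (qmul a b)| <= sa a & `|q3 (qmul a b)| <= sa a].
Proof.
case=> h0 h1 h2 h3; rewrite /qmul /sa !mkqE.
have [a00 a00'] := lem_ab (q0 a) h0; have [a01 a01'] := lem_ab (q0 a) h1.
have [a02 a02'] := lem_ab (q0 a) h2; have [a03 a03'] := lem_ab (q0 a) h3.
have [a10 a10'] := lem_ab (q1 a) h0; have [a11 a11'] := lem_ab (q1 a) h1.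
have [a12 a12'] := lem_ab (q1 a) h2; have [a13 a13'] := lem_ab (q1 a) h3.
have [a20 a20'] := lem_ab (q2 a) h0; have [a21 a21'] := lem_ab (q2 a) h1.
have [a22 a22'] := lem_ab (q2 a) h2; have [a23 a23'] := lem_ab (q2 a) h3.
have [a30 a30'] := lem_ab (q3 a) h0; have [a31 a31'] := lem_ab (q3 a) h1.
have [a32 a32'] := lem_ab (q3 a) h2; have [a33 a33'] := lem_ab (q3 a) h3.
by split; rewrite ler_norml; apply/andP; split; lra.
Qed.

Lemma unit_bnd x : qvnorm x = 1 -> forall j, bnd (x j).
Proof.
rewrite qvnormE => h j.
have hS : \sum_j qss (x j) = 1.
  by rewrite -(sqr_sqrtr (sumr_ge0 _ (fun k _ => qss_ge0 (x k)))) h expr1n.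
have hj : qss (x j) <= 1.
  rewrite -hS (bigD1 j) //= lerDl; apply: sumr_ge0 => k _; exact: qss_ge0.
move: hj; rewrite /qss => hj.
have s0 := sqr_ge0 (q0 (x j)); have s1 := sqr_ge0 (q1 (x j)).
have s2 := sqr_ge0 (q2 (x j)); have s3 := sqr_ge0 (q3 (x j)).
by split; rewrite ler_norml; apply/andP; split; nra.
Qed.

Lemma qmx_bounded (M : qmx R J J) :
  exists B, forall x, qvnorm x = 1 -> qvnorm (qmx_apply M x) <= B.
Proof.
pose C i := \sum_j sa (M i j).
exists (Num.sqrt (\sum_i 4 * C i ^+ 2)) => x hx.
have hb := unit_bnd hx.
rewrite qvnormE; apply: ler_wsqrtr; apply: ler_sum => i _.
have hC : forall (f : quat -> R), (forall a b, bnd b -> `|f (qmul a b)| <= sa a) ->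
    (forall F : J -> quat, f (\sum_j F j) = \sum_j f (F j)) ->
    f (qmx_apply M x i) ^+ 2 <= C i ^+ 2.
  move=> f hf hs.
  have : `|f (qmx_apply M x i)| <= C i.
    rewrite /qmx_apply hs; apply: le_trans (ler_norm_sum _ _ _) _.
    by apply: ler_sum => j _; apply: hf.
  rewrite ler_norml => /andP [l1 l2]; nra.
have c0 := hC (@q0 R) (fun a b hb => let: And4 h _ _ _ := qmul_cb a hb in h) (fun F => q0_sum _ _ F).
have c1 := hC (@q1 R) (fun a b hb => let: And4 _ h _ _ := qmul_cb a hb in h) (fun F => q1_sum _ _ F).
have c2 := hC (@q2 R) (fun a b hb => let: And4 _ _ h _ := qmul_cb a hb in h) (fun F => q2_sum _ _ F).
have c3 := hC (@q3 R) (fun a b hb => let: And4 _ _ _ h := qmul_cb a hb in h) (fun F => q3_sum _ _ F).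
rewrite /qss; lra.
Qed.

Lemma norm_inj (M : qmx R J J) x : qmx_norm2 M < 1 ->
  (forall i, x i = - qmx_apply M x i) -> forall i, x i = 0.
Proof.
move=> hN hx.
case: (eqVneq (qvnorm x) 0) => [/qvnorm_eq0 //|hne].
exfalso.
have hge : 0 <= qvnorm x by rewrite /qvnorm sqrtr_ge0.
have hpos : 0 < qvnorm x by rewrite lt_def hne hge.
pose c := (qvnorm x)^-1.
have hc : 0 <= c by rewrite /c invr_ge0.
pose w := fun j => qscale c (x j).
have hw : qvnorm w = 1 by rewrite /w qvnorm_scale ger0_norm // /c mulVf.
have ex : x = (fun i => - qmx_apply M x i) by apply: funext => i; exact: hx.
have hMw : qvnorm (qmx_apply M w) = 1.
  rewrite /w qmx_apply_scale qvnorm_scale ger0_norm // -qvnorm_opp -ex.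
  by rewrite /c mulVf.
have [B hB] := qmx_bounded M.
move: hN; rewrite /qmx_norm2; set S := (X in sup X) => hN.
have hS1 : S 1 by exists w.
have hsup : has_sup S.
  split; first by exists 1.
  exists B => y [z hz <-]; exact: hB.
have h := sup_upper_bound hsup hS1.
by move: hN; rewrite ltNge h.
Qed.
End Norm.

Section Inv.
Variables (R : realType) (n n3 : nat).
Local Notation tens := (tens R n n3).

Lemma dq_scale c (a : quat R) : dq (qscale c a) = qscale c (dq a).
Proof. by apply: quatP; rewrite /dq /qscale ?mkqE; ring. Qed.
Lemma cq_scale c (a : quat R) : cq (qscale c a) = qscale c (cq a).
Proof. by apply: quatP; rewrite /cq /qscale ?mkqE; ring. Qed.
Lemma scale_qmul c (a b : quat R) : qmul (qscale c a) b = qscale c (qmul a b).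
Proof. by apply: quatP; rewrite /qscale /qmul ?qcomps; ring. Qed.
Lemma qscale_sum c (I : finType) (F : I -> quat R) :
  qscale c (\sum_i F i) = \sum_i qscale c (F i).
Proof. exact: (big_morph (@qscale R c) (qscaleD c) (qscale0 c)). Qed.

Lemma tprod_scr c (A X : tens) : A * (tsc c X : tens) = tsc c (A * X).
Proof.
apply: tensP => i l s; rewrite /tsc !tmulE !qtprodE qscale_sum.
by apply: eq_bigr => x _; rewrite qmul_scale.
Qed.

Lemma tprod_scl c (A X : tens) : (tsc c X : tens) * A = tsc c (X * A).
Proof.
apply: tensP => i l s; rewrite /tsc !tmulE !qtprodE qscale_sum.
apply: eq_bigr => x _; rewrite !bzE' /tsc dq_scale cq_scale -qscaleD.
by rewrite scale_qmul.
Qed.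

Lemma inv_exists (T : tens) : qtnorm_s T < 1 ->
  exists M : tens, (1 + T) * M = 1 /\ M * (1 + T) = 1.
Proof.
move=> hN.
have inj0 : forall X : tens, (1 + T) * X = 0 -> X = 0.
  move=> X; rewrite mulrDl mul1r => /eqP; rewrite addr_eq0 => /eqP e.
  apply: tensP => i l s.
  have := @norm_inj R _ (bcirc_z T) (fun u => X u.2 l u.1) hN.
  move=> /(_ _ (s, i)) /= -> // [s' i'].
  exact: (congr1 (fun Y : tens => Y i' l s') e).
have inj1 : injective (fun X : tens => (1 + T) * X).
  move=> X Y /= e; apply/eqP; rewrite -subr_eq0; apply/eqP; apply: inj0.
  by rewrite mulrBr e subrr.
have [X1 hX1] : exists X1 : tens, (1 + T) * X1 = 1.
  apply: (@F_surj R n n3 (fun X : tens => (1 + T) * X)) => //.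
  - by move=> X Y; rewrite mulrDr.
  - by move=> c X; rewrite tprod_scr.
have inj2 : injective (fun X : tens => X * (1 + T)).
  move=> X Y /= e; apply/eqP; rewrite -subr_eq0; apply/eqP.
  by rewrite -[X - Y]mulr1 -hX1 mulrA mulrBl e subrr mul0r.
have [Z hZ] : exists Z : tens, Z * (1 + T) = 1.
  apply: (@F_surj R n n3 (fun X : tens => X * (1 + T))) => //.
  - by move=> X Y; rewrite mulrDl.
  - by move=> c X; rewrite tprod_scl.
exists X1; split => //.
have -> : X1 = Z by rewrite -[Z]mulr1 -hX1 mulrA hZ mul1r.
exact: hZ.
Qed.
End Inv.

Unset Implicit Arguments. Set Strict Implicit.
Local Open Scope qt_scope.

Theorem corollary4p5 (R : realType) (n n3 k kB : nat)
    (A E AD BD : qtensor R n n n3) :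
  QTindex A k -> QTdrazin A k AD ->
  E = A *Q AD *Q E *Q A *Q AD ->
  QTindex (A +Q E) kB -> QTdrazin (A +Q E) kB BD ->
  qtnorm_s (AD *Q E) < 1 ->
  [/\ A *Q AD = (A +Q E) *Q BD,
      BD -Q AD = qtopp (BD *Q E *Q AD),
      BD -Q AD = qtopp (AD *Q E *Q BD),
      (exists M, qtinverse (@qtid R n n3 +Q AD *Q E) M /\ BD = M *Q AD) &
      (exists M, qtinverse (@qtid R n n3 +Q E *Q AD) M /\ BD = AD *Q M)].
Proof.
move=> _ [hA1 hA2 hA3] hE _ [hB1 hB2 hB3] hN.
have [M [hM1 hM2]] := @inv_exists R n n3 (AD *Q E) hN.
rewrite !tpowE in hA1 hB1.
have := @drazin_all (tens R n n3) A E AD BD M k kB hA1 hA2 hA3 hE hB1 hB2 hB3 hM1 hM2.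
case=> g1 g2 g3 g4 [M' [h1 h2 h3]].
split => //.
- by exists M.
- by exists M'.
Qed.
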